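(* For any Tychonoff space $X$, the following conditions are equivalent: (i) the free topological group $F_G(X)$ is an $F'$-space; (ii) the free Abelian topological group $A_G(X)$ is an $F'$-space; (iii) $X$ is a $P$-space.
   Context: A space is an $F'$-space if any two disjoint cozero sets in it have disjoint closures; it is a $P$-space if every $G_\delta$-set is open. For a Tychonoff space $X$ with a fixed point $x_0$, the (Graev) free topological group $F_G(X)$ is the unique topological group with identity $x_0$ containing $X$ as a subspace such that every continuous map from $X$ to a topological group sending $x_0$ to the identity extends to a continuous homomorphism $F_G(X)\to G$; it does not depend on the choice of $x_0$ up to topological isomorphism. The (Graev) free Abelian topological group $A_G(X)$ is defined analogously with Abelian groups in place of groups. *)

(* Defs.v *)
From HB Require Import structures.
From mathcomp Require Import all_boot all_order all_algebra.
From mathcomp Require Import all_classical all_reals topology.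
From mathcomp Require Import Rstruct Rstruct_topology.
From Stdlib Require Import Rdefinitions.
Set Implicit Arguments. Unset Strict Implicit. Unset Printing Implicit Defensive.
Import Order.TTheory GRing.Theory Num.Theory.
Local Open Scope classical_set_scope.

Definition cozero (T : topologicalType) (f : T -> R) : set T :=
  [set x | f x <> 0%R].

Definition tychonoff_space (T : topologicalType) : Prop :=
  accessible_space T /\
  forall (B : set T) (a : T), closed B -> ~ B a ->
    exists f : T -> R, continuous f /\ f a = 0%R /\ (forall b, B b -> f b = 1%R).

Definition F'_space (T : topologicalType) : Prop :=
  forall f g : T -> R, continuous f -> continuous g ->
    cozero f `&` cozero g = set0 ->
    closure (cozero f) `&` closure (cozero g) = set0.

Definition P_space (T : topologicalType) : Prop :=
  forall U : nat -> set T, (forall n, open (U n)) -> open (\bigcap_n U n).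

Definition is_topgroup (G : topologicalType)
  (mul : G -> G -> G) (inv : G -> G) (one : G) : Prop :=
  (forall x y z, mul x (mul y z) = mul (mul x y) z) /\
  (forall x, mul one x = x) /\ (forall x, mul x one = x) /\
  (forall x, mul (inv x) x = one) /\ (forall x, mul x (inv x) = one) /\
  continuous (fun p : G * G => mul p.1 p.2) /\ continuous inv.

Definition is_abelian_topgroup (G : topologicalType)
  (mul : G -> G -> G) (inv : G -> G) (one : G) : Prop :=
  is_topgroup mul inv one /\ (forall x y, mul x y = mul y x).

Definition is_hom (G H : Type) (mulG : G -> G -> G) (mulH : H -> H -> H)
  (phi : G -> H) : Prop := forall x y, phi (mulG x y) = mulH (phi x) (phi y).

Definition is_subgroup (G : Type) (mul : G -> G -> G) (inv : G -> G) (one : G)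
  (S : set G) : Prop :=
  [/\ S one, (forall x y, S x -> S y -> S (mul x y)) & (forall x, S x -> S (inv x))].

Definition embedding (X G : topologicalType) (j : X -> G) : Prop :=
  [/\ injective j, continuous j &
      forall U : set X, open U -> exists V : set G, open V /\ U = j @^-1` V].

Definition graev_free_topgroup (X : topologicalType) (x0 : X)
  (G : topologicalType) (mul : G -> G -> G) (inv : G -> G) (one : G)
  (j : X -> G) : Prop :=
  [/\ is_topgroup mul inv one, embedding j, j x0 = one,
      (forall S, is_subgroup mul inv one S -> range j `<=` S -> S = setT) &
      forall (H : topologicalType) (mulH : H -> H -> H) (invH : H -> H) (oneH : H),
        is_topgroup mulH invH oneH ->
        forall f : X -> H, continuous f -> f x0 = oneH ->
        exists phi : G -> H, [/\ continuous phi, is_hom mul mulH phi &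
                                 forall x, phi (j x) = f x]].

Definition graev_free_abelian_topgroup (X : topologicalType) (x0 : X)
  (A : topologicalType) (mul : A -> A -> A) (inv : A -> A) (one : A)
  (j : X -> A) : Prop :=
  [/\ is_abelian_topgroup mul inv one, embedding j, j x0 = one,
      (forall S, is_subgroup mul inv one S -> range j `<=` S -> S = setT) &
      forall (H : topologicalType) (mulH : H -> H -> H) (invH : H -> H) (oneH : H),
        is_abelian_topgroup mulH invH oneH ->
        forall f : X -> H, continuous f -> f x0 = oneH ->
        exists phi : A -> H, [/\ continuous phi, is_hom mul mulH phi &
                                 forall x, phi (j x) = f x]].

(* Main.v *)
Require Import Defs.
From HB Require Import structures.
From mathcomp Require Import all_boot all_order all_algebra.
From mathcomp Require Import all_classical all_reals topology normedtype sequences.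
From mathcomp Require Import Rstruct Rstruct_topology.
From Stdlib Require Import Rdefinitions.
From mathcomp Require Import ring lra.
Set Implicit Arguments. Unset Strict Implicit. Unset Printing Implicit Defensive.
Import Order.TTheory GRing.Theory Num.Theory.
Local Open Scope classical_set_scope.
Local Open Scope ring_scope.

Section Gd.
Variable G : topologicalType.
Definition gdelta : Type := G.
HB.instance Definition _ := Choice.on gdelta.
Definition gdop (W : set gdelta) : Prop :=
  forall x, W x -> exists V : nat -> set G, [/\ (forall n, open (V n)), (forall n, V n x) & \bigcap_n V n `<=` W].
Lemma gdopT : gdop setT.
Proof. by move=> x _; exists (fun _ => setT); split => // n; exact: openT. Qed.
Lemma gdopI : setI_closed gdop.
Proof.
move=> A B hA hB x [/hA [V [oV Vx VA]] /hB [W [oW Wx WB]]].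
exists (fun n => V n `&` W n); split => //.
- by move=> n; apply: openI.
- by move=> y Hy; split; [apply: VA => n _; case: (Hy n I)|apply: WB => n _; case: (Hy n I)].
Qed.
Lemma gdop_bigU (I : Type) (f : I -> set gdelta) : (forall i, gdop (f i)) -> gdop (\bigcup_i f i).
Proof.
move=> hf x [i _ fx]; have [V [oV Vx VA]] := hf i x fx.
by exists V; split => // y /VA fy; exists i.
Qed.
HB.instance Definition _ := isOpenTopological.Build gdelta gdopT gdopI gdop_bigU.
Definition gd (x : G) : gdelta := x.
Lemma gd_nbhs (x : gdelta) (A : set gdelta) :
  nbhs x A <-> exists B, [/\ gdop B, B x & B `<=` A].
Proof. rewrite /nbhs /=. Fail progress simpl. split => //. Qed.

Lemma gd_open_nbhs (V : nat -> set G) (x : G) : (forall n, open (V n)) -> (forall n, V n x) ->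
  @nbhs gdelta gdelta x (\bigcap_n V n).
Proof.
move=> oV Vx. exists (\bigcap_n V n); split; [|by move=> n _; apply: Vx|by []].
move=> y Vy; exists V; split => // n; exact: (Vy n I).
Qed.

Lemma G_open_nbhs (A : set G) x : nbhs x A -> exists B, [/\ open B, B x & B `<=` A].
Proof. by rewrite nbhsE => -[B [oB Bx] BA]; exists B. Qed.

Lemma gd_mul_cont (mul : G -> G -> G) :
  continuous (fun p : G * G => mul p.1 p.2) ->
  continuous (fun p : gdelta * gdelta => gd (mul p.1 p.2)).
Proof.
move=> mc [x y] W [B [oB Bxy BW]].
have [V [oV Vx VB]] := oB _ Bxy.
have : forall n, exists O : set G * set G, [/\ open O.1, O.1 x, open O.2, O.2 y &
    forall a b, O.1 a -> O.2 b -> V n (mul a b)].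
  move=> n.
  have := mc (x, y) (V n) (open_nbhs_nbhs (conj (oV n) (Vx n))).
  case=> [[A1 A2]] /= [/G_open_nbhs [O1 [oO1 O1x O1A]] /G_open_nbhs [O2 [oO2 O2y O2A]]] AV.
  exists (O1, O2); split => // a b /O1A a1 /O2A b2.
  exact: (AV (a, b)).
case/choice => O HO.
exists (\bigcap_n (O n).1, \bigcap_n (O n).2).
  split; apply: gd_open_nbhs => n; by case: (HO n).
case=> a b /= [Ha Hb]; apply: BW; apply: VB => n _.
by case: (HO n) => _ _ _ _; apply; [exact: Ha|exact: Hb].
Qed.

Lemma gd_inv_cont (inv : G -> G) : continuous inv -> continuous (fun x : gdelta => gd (inv x)).
Proof.
move=> ic x W; move=> [B [oB Bx BW]].
have [V [oV Vx VB]] := oB _ Bx.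
have : forall n, exists O : set G, [/\ open O, O x & forall a, O a -> V n (inv a)].
  move=> n.
  have := ic x (V n) (open_nbhs_nbhs (conj (oV n) (Vx n))).
  case/G_open_nbhs => O [oO Ox OV]; exists O; split => // a /OV.
case/choice => O HO.
exists (\bigcap_n O n); split.
- move=> a Ha; exists O; split; [move=> n; by case: (HO n)|move=> n; exact: (Ha n I)|by []].
- by move=> n _; case: (HO n).
- by move=> a Ha; apply: BW; apply: VB => n _; case: (HO n) => _ _; apply; apply: Ha.
Qed.

Lemma gd_topgroup mul inv (one : G) : is_topgroup mul inv one -> is_topgroup (G := gdelta) mul inv one.
Proof.
case=> [h1 [h2 [h3 [h4 [h5 [h6 h7]]]]]].
by do 5 (split => //); split; [apply: gd_mul_cont|apply: gd_inv_cont].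
Qed.

Lemma gd_abtopgroup mul inv (one : G) : is_abelian_topgroup mul inv one ->
  is_abelian_topgroup (G := gdelta) mul inv one.
Proof. by case=> h1 h2; split => //; apply: gd_topgroup. Qed.

Lemma gd_cont (X : topologicalType) (j : X -> G) : P_space X -> continuous j ->
  continuous (fun x => gd (j x)).
Proof.
move=> PX jc x W [B [oB Bx BW]].
have [V [oV Vx VB]] := oB _ Bx.
rewrite nbhsE; exists (\bigcap_n (j @^-1` V n)).
  split; last by move=> n _; apply: Vx.
  apply: PX => n; move/continuousP: jc; apply; apply: oV.
by move=> y Hy; apply: BW; apply: VB.
Qed.

Lemma id_cont_P : continuous (fun x : G => gd x) -> P_space G.
Proof.
move=> c U oU; move/continuousP: c => c.
have := c (\bigcap_n U n : set gdelta); apply.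
rewrite openE => y Hy.
rewrite /interior; apply: gd_open_nbhs => // n; exact: Hy.
Qed.
End Gd.
Lemma small_zero (r : R) : (forall n : nat, `|r| < n.+1%:R^-1) -> r = 0.
Proof.
move=> H; apply/eqP; apply/negPn/negP => r0.
have rp : 0 < `|r| by rewrite normr_gt0.
have rp' : 0 < `|r|^-1 by rewrite invr_gt0.
have := archi_boundP (ltW rp').
set N := Num.Def.archi_bound _ => HN.
have := H N; rewrite -[X in X < _]invrK ltf_pV2 ?posrE ?ltr0Sn // => a.
have := lt_trans a HN; rewrite ltr_nat => /ltnW; by rewrite ltnn.
Qed.

Lemma P_cozero_closed (T : topologicalType) (f : T -> R) : P_space T -> continuous f ->
  closure (cozero f) `<=` cozero f.
Proof.
move=> PT fc p cp fp0.
pose U n := f @^-1` ball (0:R) n.+1%:R^-1.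
have oZ : open (\bigcap_n U n).
  apply: PT => n; move/continuousP: fc; apply. exact: (@ball_open _ R^o).
have Zp : (\bigcap_n U n) p.
  move=> n _; rewrite /U /= fp0; apply: ballxx; by rewrite invr_gt0.
have [q [fq Zq]] := cp _ (open_nbhs_nbhs (conj oZ Zp)).
apply: fq; apply: small_zero => n.
have := Zq n I; rewrite /U /ball /= sub0r normrN //.
Qed.

Lemma P_F' (T : topologicalType) : P_space T -> F'_space T.
Proof.
move=> PT f g fc gc fg; apply/seteqP; split => // x [/(P_cozero_closed PT fc) a /(P_cozero_closed PT gc) b].
by rewrite -fg.
Qed.

Lemma hom_fix (X G : Type) mul inv (one : G) (j : X -> G) (phi : G -> G) :
  (forall x y z, mul x (mul y z) = mul (mul x y) z) ->
  (forall x, mul one x = x) -> (forall x, mul x one = x) ->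
  (forall x, mul (inv x) x = one) -> (forall x, mul x (inv x) = one) ->
  (forall S, is_subgroup mul inv one S -> range j `<=` S -> S = setT) ->
  is_hom mul mul phi -> (forall x, phi (j x) = j x) -> forall g, phi g = g.
Proof.
move=> mA m1 m1' mV mV' gen hom hfix g.
have ph1 : phi one = one.
  have e : phi one = mul (phi one) (phi one) by rewrite -hom m1.
  apply: esym; transitivity (mul (inv (phi one)) (phi one)); first by rewrite mV.
  by rewrite {2}e mA mV m1.
have : [set g | phi g = g] = setT.
  apply: gen; last by move=> _ [x _ <-]; exact: hfix.
  split => //.
  - by move=> x y /= hx hy; rewrite hom hx hy.
  - move=> x /= hx.
    have e : mul (phi (inv x)) x = one by rewrite -{2}hx -hom mV ph1.
    by rewrite -[LHS]m1' -(mV' x) mA e m1.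
by move=> e; have : [set g | phi g = g] g by rewrite e.
Qed.

Lemma free_P (X : topologicalType) (G : topologicalType) mul inv (one : G) (j : X -> G) :
  is_topgroup mul inv one ->
  (forall S, is_subgroup mul inv one S -> range j `<=` S -> S = setT) ->
  (exists phi : G -> gdelta G, [/\ continuous phi, is_hom mul mul phi & forall x, phi (j x) = gd (j x)]) ->
  P_space G.
Proof.
move=> [mA [m1 [m1' [mV [mV' _]]]]] gen [phi [pc ph pj]].
have e := hom_fix mA m1 m1' mV mV' gen ph pj.
apply: id_cont_P.
have -> : (fun x : G => gd x) = phi by apply: funext => x; rewrite e.
exact: pc.
Qed.
Lemma cont_mul_pair (T G : topologicalType) (mul : G -> G -> G) (a b : T -> G) x :
  continuous (fun p : G * G => mul p.1 p.2) -> {for x, continuous a} -> {for x, continuous b} ->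
  {for x, continuous (fun y => mul (a y) (b y))}.
Proof.
move=> mc ac bc.
apply: (@cvg_comp _ _ _ (fun y => (a y, b y)) (fun p : G * G => mul p.1 p.2) _ (nbhs (a x, b x))).
  by apply: cvg_pair.
exact: (mc (a x, b x)).
Qed.

Lemma R_topgroup : is_abelian_topgroup (fun a b : R => a + b) (fun a => - a) 0.
Proof.
split; last by move=> *; rewrite addrC.
split; first by move=> *; rewrite addrA.
split; first by move=> *; rewrite add0r.
split; first by move=> *; rewrite addr0.
split; first by move=> *; rewrite addNr.
split; first by move=> *; rewrite addrN.
split.
exact: (@add_continuous R^o).
exact: (@opp_continuous R^o).
Qed.

Lemma F'_zero (X G : topologicalType) mul inv (one : G) (j : X -> G) (x0 : X) :
  is_topgroup mul inv one -> continuous j ->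
  (forall f : X -> R, continuous f -> f x0 = 0 ->
     exists phi : G -> R, [/\ continuous phi, is_hom mul (fun a b : R => a + b) phi &
                              forall x, phi (j x) = f x]) ->
  F'_space G -> forall h : X -> R, continuous h -> forall z, h z = 0 ->
  nbhs z [set y | h y = 0].
Proof.
move=> [mA [m1 [m1' [mV [mV' [mc ic]]]]]] jc U F' h hc z hz.
apply: contrapT => Hn.
pose k y := h y * h y.
have kc : continuous k by move=> x; apply: (@continuousM R _ h h); apply: hc.
pose f y := k y - k x0.
have fc : continuous f.
  move=> x; apply: (@continuousB R R^o _ k (cst (k x0))); [exact: kc|exact: cst_continuous].
have f0 : f x0 = 0 by rewrite /f subrr.
have [phi [pc ph pj]] := U f fc f0.
have ph1 : phi one = 0.
  have e : phi one = phi one + phi one by rewrite -ph m1.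
  by have /addrI -> : phi one + phi one = phi one + 0 by rewrite addr0 -e.
have phV g : phi (inv g) = - phi g.
  by apply/eqP; rewrite -addr_eq0 -ph mV ph1.
pose g1 g := phi g + `|phi g|.
pose g2 g := phi g - `|phi g|.
have nc : continuous (fun g => `|phi g|).
  move=> x; apply: continuous_comp; first exact: pc.
  exact: (@norm_continuous _ R^o).
have g1c : continuous g1 by move=> x; apply: (@continuousD R R^o _ phi (fun g => `|phi g|)); [exact: pc|exact: nc].
have g2c : continuous g2 by move=> x; apply: (@continuousB R R^o _ phi (fun g => `|phi g|)); [exact: pc|exact: nc].
have disj : cozero g1 `&` cozero g2 = set0.
  apply/seteqP; split => // g []; rewrite /cozero /g1 /g2 /=.
  have [p0|p0] := lerP 0 (phi g).
    by rewrite ger0_norm // subrr.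
  by rewrite ltr0_norm // addrN.
have := F' g1 g2 g1c g2c disj.
move/seteqP => [/(_ one) + _]; apply.
have key (t : X -> G) : {for z, continuous t} -> t z = one ->
    forall B, nbhs one B -> exists y, B (t y) /\ h y != 0.
  move=> tc tz B nB.
  have nB' : nbhs z (t @^-1` B) by apply: tc; rewrite tz.
  apply: contrapT => nex; apply: Hn; apply: filterS nB' => y By.
  apply/eqP; apply: contrapT => /negP hy; apply: nex; exists y; split => //.
have kz : k z = 0 by rewrite /k hz mulr0.
have hpos y : h y != 0 -> 0 < k y.
  by move=> hy; rewrite /k -expr2 exprn_even_gt0.
split.
- move=> B nB.
  have tc : {for z, continuous (fun y => mul (j y) (inv (j z)))}.
    apply: cont_mul_pair => //; [exact: jc|exact: cst_continuous].
  have [y [By hy]] := key _ tc (mV' _) B nB.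
  exists (mul (j y) (inv (j z))); split => //.
  rewrite /cozero /g1 /= ph phV !pj /f.
  have -> : k y - k x0 - (k z - k x0) = k y by rewrite kz; ring.
  rewrite ger0_norm; last exact: ltW (hpos _ hy).
  by apply/eqP; rewrite gt_eqF // addr_gt0 // hpos.
- move=> B nB.
  have tc : {for z, continuous (fun y => mul (j z) (inv (j y)))}.
    apply: cont_mul_pair => //; first exact: cst_continuous.
    apply: continuous_comp; [exact: jc|exact: ic].
  have [y [By hy]] := key _ tc (mV' _) B nB.
  exists (mul (j z) (inv (j y))); split => //.
  rewrite /cozero /g2 /= ph phV !pj /f.
  have -> : k z - k x0 - (k y - k x0) = - k y by rewrite kz; ring.
  rewrite ltr0_norm; last by rewrite oppr_lt0 hpos.
  rewrite opprK; apply/eqP; rewrite lt_eqF //.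
  by rewrite -opprD oppr_lt0 addr_gt0 // hpos.
Qed.
Lemma zero_open_P (X : topologicalType) : tychonoff_space X ->
  (forall h : X -> R, continuous h -> forall z, h z = 0 -> nbhs z [set y | h y = 0]) ->
  P_space X.
Proof.
move=> [_ tych] Z U oU.
rewrite openE => z Uz; rewrite /interior.
have : forall n, exists c : X -> R, [/\ continuous c, c z = 0,
    forall y, 0 <= c y <= 1 & forall y, ~ U n y -> c y = 1].
  move=> n.
  have [f [fc [fz f1]]] := tych (~` U n) z (open_closedC (oU n)) (fun h => h (Uz n I)).
  exists ((fun y => f y * f y) \min (cst 1)); split.
  - move=> x; apply: (@continuous_min R X (fun y => f y * f y) (cst 1)).
      by apply: continuousM; apply: fc.
    exact: cst_continuous.
  - by rewrite /= fz mulr0 /cst /= minEle ler01.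
  - move=> y /=; rewrite /cst /= ge_min lexx orbT andbT le_min ler01 andbT.
    by rewrite -expr2 sqr_ge0.
  - by move=> y /f1 /= ->; rewrite mulr1 /cst minxx.
case/choice => c Hc.
have c0 n y : 0 <= c n y by case: (Hc n) => _ _ /(_ y) /andP[].
have c1 n y : c n y <= 1 by case: (Hc n) => _ _ /(_ y) /andP[].
pose r : R := 2^-1.
have r0 : 0 < r by rewrite /r invr_gt0.
have rr : r + r = 1.
  rewrite /r. by field.
have r2 n : r ^+ n = r ^+ n.+1 + r ^+ n.+1.
  by rewrite exprSr -mulrDr rr mulr1.
pose S N y := \sum_(0 <= n < N) c n y * r ^+ n.+1.
have SS N y : S N.+1 y = S N y + c N y * r ^+ N.+1 by rewrite /S big_nat_recr.
have S0 y : S 0 y = 0 by rewrite /S big_geq.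
have Smono N k y : S N y <= S (addn N k) y.
  elim: k => [|k IH]; first by rewrite addn0.
  rewrite addnS SS; apply: (le_trans IH); rewrite lerDl.
  by apply: mulr_ge0 => //; apply: exprn_ge0; apply: ltW.
have Stail N k y : S (addn N k) y <= S N y + (r ^+ N - r ^+ (addn N k)).
  elim: k => [|k IH]; first by rewrite addn0 subrr addr0.
  rewrite addnS SS.
  have : c (addn N k) y * r ^+ (addn N k).+1 <= r ^+ (addn N k).+1.
    by rewrite -[X in _ <= X]mul1r ler_wpM2r // exprn_ge0 // ltW.
  move: IH; rewrite (r2 (addn N k)); lra.
have Sle N M y : S M y <= S N y + r ^+ N.
  case: (leqP N M) => [/subnKC <-|/ltnW /subnKC <-].
    apply: (le_trans (Stail N (subn M N) y)); rewrite lerD2l lerBlDr lerDl.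
    by apply: exprn_ge0; apply: ltW.
  apply: (le_trans (Smono M (subn N M) y)); rewrite lerDl.
  by apply: exprn_ge0; apply: ltW.
pose h y := sup (range (fun N => S N y)).
have hsup y : has_sup (range (fun N => S N y)).
  split; first by exists (S 0 y), 0%N.
  exists (S 0 y + r ^+ 0) => _ [M _ <-]; exact: Sle.
have hge N y : S N y <= h y by apply: (sup_upper_bound (hsup y)); exists N.
have hle N y : h y <= S N y + r ^+ N.
  by apply: ge_sup; [exists (S 0 y), 0%N|move=> _ [M _ <-]; exact: Sle].
have hz : h z = 0.
  have Sz N : S N z = 0.
    by rewrite /S big1 // => n _; case: (Hc n) => _ -> _ _; rewrite mul0r.
  apply/eqP; rewrite eq_le; apply/andP; split; last by rewrite -(Sz 0%N) hge.
  by apply: ge_sup; [exists (S 0 z), 0%N|move=> _ [M _ <-]; rewrite Sz].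
have hU y : h y = 0 -> forall n, U n y.
  move=> hy0 n; apply: contrapT => nU.
  have := hge n.+1 y; rewrite hy0 SS.
  case: (Hc n) => _ _ _ /(_ y nU) ->; rewrite mul1r.
  have := Smono 0%N n y; rewrite S0 add0n.
  have : 0 < r ^+ n.+1 by apply: exprn_gt0.
  lra.
have Sc N : continuous (S N).
  elim: N => [|N IH].
    have -> : S 0%N = cst 0 by apply: funext => y; rewrite S0.
    exact: cst_continuous.
  have -> : S N.+1 = S N + (fun y => c N y * r ^+ N.+1).
    by apply: funext => y; rewrite SS.
  move=> x; apply: (@continuousD R R^o); first exact: IH.
  apply: (@continuousM R X (c N) (cst (r ^+ N.+1))); last exact: cst_continuous.
  by case: (Hc N) => cc _ _ _; apply: cc.
have hc : continuous h.
  move=> x; apply/(@cvgrPdist_lt _ R^o) => e e0.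
  have e3 : 0 < e / 3 by rewrite divr_gt0.
  have [N rN] : exists N, r ^+ N < e / 3.
    exists (Num.Def.archi_bound (e / 3)^-1).
    have := upper_nthrootP (leqnn (Num.Def.archi_bound (e / 3)^-1)).
    rewrite /r exprVn -[X in _ -> _ < X]invrK ltf_pV2 // posrE ?invr_gt0 //.
    by rewrite exprn_gt0.
  have := Sc N x; move/(@cvgrPdist_lt _ R^o) => /(_ _ e3).
  apply: filterS => y.
  have := hge N x; have := hle N x; have := hge N y; have := hle N y.
  rewrite !ltr_norml; move=> a1 a2 a3 a4 /andP [b1 b2]; apply/andP; split; lra.
have := Z h hc z hz.
by apply: filterS => y /hU H n _; apply: H.
Qed.

Local Close Scope ring_scope.
Local Close Scope classical_set_scope.

Theorem theorem4 (X : topologicalType) (x0 : X) :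
  tychonoff_space X ->
  forall (G : topologicalType) (mulG : G -> G -> G) (invG : G -> G) (oneG : G)
         (jG : X -> G),
  graev_free_topgroup x0 mulG invG oneG jG ->
  forall (A : topologicalType) (mulA : A -> A -> A) (invA : A -> A) (oneA : A)
         (jA : X -> A),
  graev_free_abelian_topgroup x0 mulA invA oneA jA ->
  (F'_space G <-> P_space X) /\ (F'_space A <-> P_space X).
Proof.
move=> tych G mulG invG oneG jG [tgG [_ jcG _] jx0G genG UG]
  A mulA invA oneA jA [tgA [_ jcA _] jx0A genA UA].
split; split.
- move=> F'; apply: (zero_open_P tych).
  apply: (@F'_zero X G mulG invG oneG jG x0 tgG jcG _ F') => f fc f0.
  exact: (UG _ _ _ _ R_topgroup.1 f fc f0).
- move=> PX; apply: P_F'; apply: (free_P tgG genG).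
  exact: (UG _ _ _ _ (gd_topgroup tgG) _ (gd_cont PX jcG) jx0G).
- move=> F'; apply: (zero_open_P tych).
  apply: (@F'_zero X A mulA invA oneA jA x0 tgA.1 jcA _ F') => f fc f0.
  exact: (UA _ _ _ _ R_topgroup f fc f0).
- move=> PX; apply: P_F'; apply: (free_P tgA.1 genA).
  exact: (UA _ _ _ _ (gd_abtopgroup tgA) _ (gd_cont PX jcA) jx0A).
Qed.
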